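(* Let $(X,d)$ be a compact metric space and $f:X\to X$ a cw-expansive homeomorphism with cw-expansivity constant $\alpha>0$. For $\varepsilon>0$ let $N_\varepsilon>0$ be an integer such that $\max_{|n|\le N_\varepsilon}\operatorname{diam} f^n(C)>\alpha$ for every continuum $C\subset X$ with $\operatorname{diam}C\ge\varepsilon$ (such $N_\varepsilon$ exists). Then for every $x\in X$, every $0<\varepsilon<\alpha/2$ and every integer $n\ge N_\varepsilon$: (1) $f^n\big(CW^s_{\alpha/2}(x)\big)\subset CW^s_\varepsilon(f^n(x))$; (2) $CW^s_\varepsilon(x)\subset W^s(x)$; (3) $CW^s_\varepsilon(x)$ equals the connected component of $W^s_{\alpha/2}(x)\cap W^s_{\varepsilon,n}(x)$ containing $x$.
   Context: A homeomorphism $f:X\to X$ of a compact metric space is continuum-wise expansive (cw-expansive) with cw-expansivity constant $\alpha>0$ if $\sup_{n\in\mathbb Z}\operatorname{diam} f^n(C)>\alpha$ for every continuum $C\subset X$ containing more than one point. For $\varepsilon>0$ and $x\in X$: $W^s_\varepsilon(x)=\{y\in X:\ d(f^k(x),f^k(y))\le\varepsilon \text{ for all } k\ge 0\}$; $CW^s_\varepsilon(x)$ is the connected component of $W^s_\varepsilon(x)$ containing $x$; $W^s(x)=\{y\in X:\ d(f^k(x),f^k(y))\to 0 \text{ as } k\to\infty\}$; for an integer $n\ge0$, $W^s_{\varepsilon,n}(x)=\{y\in X:\ d(f^r(x),f^r(y))\le\varepsilon \text{ for } r=0,\dots,n\}$. *)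

(* Defs.v *)
From HB Require Import structures.
From mathcomp Require Import all_boot all_order all_algebra.
From mathcomp Require Import all_classical all_reals all_analysis.
Set Implicit Arguments. Unset Strict Implicit. Unset Printing Implicit Defensive.
Import Order.TTheory GRing.Theory Num.Theory numFieldNormedType.Exports.
Local Open Scope classical_set_scope.
Local Open Scope ring_scope.

Section Defs.
Context {R : realType} {X : metricType R}.

Definition homeo (f g : X -> X) :=
  [/\ continuous f, continuous g, cancel f g & cancel g f].

Definition zpow (f g : X -> X) (n : int) : X -> X :=
  match n with
  | Posz k => iter k f
  | Negz k => iter k.+1 g
  end.

Definition diam (A : set X) : R :=
  sup [set mdist x y | x in A & y in A].

Definition continuum (C : set X) :=
  [/\ C !=set0, compact C & connected C].

Definition nondegenerate (C : set X) := exists x y, [/\ C x, C y & x != y].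

Definition cw_expansive (f g : X -> X) (alpha : R) :=
  0 < alpha /\
  forall C, continuum C -> nondegenerate C ->
    sup [set diam (zpow f g n @` C) | n in [set: int]] > alpha.

Definition Ws_eps (f : X -> X) (eps : R) (x : X) : set X :=
  [set y | forall k : nat, mdist (iter k f x) (iter k f y) <= eps].

Definition CWs_eps (f : X -> X) (eps : R) (x : X) : set X :=
  connected_component (Ws_eps f eps x) x.

Definition Ws (f : X -> X) (x : X) : set X :=
  [set y | mdist (iter k f x) (iter k f y) @[k --> \oo] --> (0 : R)].

Definition Ws_eps_n (f : X -> X) (eps : R) (n : nat) (x : X) : set X :=
  [set y | forall r : nat, (r <= n)%N -> mdist (iter r f x) (iter r f y) <= eps].

End Defs.

(* Main.v *)
Require Import Defs.
From HB Require Import structures.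
From mathcomp Require Import all_boot all_order all_algebra.
From mathcomp Require Import all_classical all_reals all_analysis.
From mathcomp Require Import zify ring lra.
Import Order.TTheory GRing.Theory Num.Theory numFieldNormedType.Exports.
Local Open Scope classical_set_scope.
Local Open Scope ring_scope.
Section H.
Context {R : realType} {X : metricType R}.

Lemma inv_small {e : R} : 0 < e -> exists N, forall n, (N <= n)%N -> n.+1%:R^-1 < e.
Proof.
move=> e0; have [N _ HN] := near_infty_natSinv_lt (PosNum e0).
by exists N => n Nn; apply: HN.
Qed.

Lemma ball_mdist (x:X) e y : ball x e y <-> mdist x y < e.
Proof. by rewrite ballEmdist. Qed.

Lemma nbhs_mdist (x:X) (A : set X) : nbhs x A -> exists2 r, 0 < r & forall y, mdist x y < r -> A y.
Proof. by move/nbhs_ballP => [r r0 H]; exists r => // y; rewrite -ball_mdist; apply: H. Qed.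

Lemma mdist_nbhs (x:X) {r : R} : 0 < r -> nbhs x [set y | mdist x y < r].
Proof. by move=> r0; rewrite -ballEmdist; apply: nbhsx_ballx. Qed.

Lemma cont_ed {h : X -> X} : continuous h -> forall {x e}, 0<e ->
  exists2 r, 0<r & forall y, mdist x y < r -> mdist (h x) (h y) < e.
Proof.
move=> hc x e e0.
have : nbhs x (h @^-1` [set z | mdist (h x) z < e]).
  by apply: hc; exact: mdist_nbhs.
by move/nbhs_mdist.
Qed.

Lemma closure_mdist (A : set X) z : closure A z -> forall e, 0 < e -> exists a, A a /\ mdist z a < e.
Proof. by move=> cl e e0; have [a [Aa Ba]] := cl _ (mdist_nbhs z e0); exists a. Qed.

Lemma mdist_closed (A : set X) : (forall z, (forall e, 0 < e -> exists a, A a /\ mdist z a < e) -> A z) -> closed A.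
Proof. by move=> H z /closure_mdist; apply: H. Qed.

Lemma cluster_seq {F : nat -> set X} : compact [set: X] -> (forall n, F n !=set0) ->
  (forall n m, (n <= m)%N -> F m `<=` F n) ->
  exists z, forall n e, 0 < e -> exists w, F n w /\ mdist z w < e.
Proof.
move=> cX ne dec.
have FF : ProperFilter (filter_from [set: nat] F).
  apply: filter_from_proper; last by move=> i _; exact: ne.
  apply: filter_from_filter; first by exists 0%N.
  move=> i j _ _; exists (maxn i j) => // w Fw; split; apply: (dec _ _ _ w Fw);
    [exact: leq_maxl|exact: leq_maxr].
have [z [_ cz]] := cX _ FF (@filterT _ _ FF).
exists z => n e e0.
have [w [Fw dw]] := cz (F n) _ (ex_intro2 _ _ n I (fun _ h => h)) (mdist_nbhs z e0).
by exists w.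
Qed.

Lemma iter_cont {h : X -> X} : continuous h -> forall k, continuous (iter k h).
Proof.
move=> hc; elim=> [|k IH].
  by move=> x; exact: cvg_id.
have -> : iter k.+1 h = h \o iter k h by apply/funext => y; rewrite iterS.
by move=> x; apply: continuous_comp; [exact: IH|exact: hc].
Qed.

Lemma zpow_cont {f g : X -> X} n : homeo f g -> continuous (zpow f g n).
Proof. by case=> fc gc _ _; case: n => k /=; apply: iter_cont. Qed.

Lemma iterK {f g : X -> X} : cancel f g -> forall k y, iter k g (iter k f y) = y.
Proof.
move=> fK; elim=> [//|k IH] y.
by rewrite [iter k.+1 f y]iterS iterSr fK IH.
Qed.

Lemma zpow_iter {f g : X -> X} : cancel f g -> forall (j : int) k m y,
  k%:Z + j = m%:Z -> zpow f g j (iter k f y) = iter m f y.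
Proof.
move=> fK; case=> a k m y /= H.
  have -> : m = (a + k)%N by lia.
  by rewrite iterD.
have -> : k = (a.+1 + m)%N by lia.
by rewrite iterD -[g (iter a g _)]iterS (iterK fK).
Qed.

Lemma le_eps (a b : R) : (forall e, 0 < e -> a <= b + e) -> a <= b.
Proof. by move/ler_addgt0Pr. Qed.

Lemma Ws_closed (f : X -> X) e x : continuous f -> closed (Ws_eps f e x).
Proof.
move=> fc; apply: mdist_closed => z H k; apply: le_eps => eta eta0.
have [r r0 Hr] := @cont_ed _ (iter_cont fc k) z eta eta0.
have [a [Wa dza]] := H r r0.
have := Hr _ dza => h.
apply: (le_trans (metric_triangle _ (iter k f a) _)).
by apply: lerD; [exact: Wa| rewrite metric_sym; exact: ltW].
Qed.

Lemma CWs_closed (f : X -> X) e x : continuous f -> closed (CWs_eps f e x).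
Proof. by move=> fc; apply: component_closed; exact: Ws_closed. Qed.

Lemma CWs_compact (f : X -> X) e x : compact [set: X] -> continuous f -> compact (CWs_eps f e x).
Proof. by move=> cX fc; exact: (subclosed_compact (CWs_closed f e x fc) cX (@subsetT _ _)). Qed.

Lemma CWs_refl (f : X -> X) e x : 0 <= e -> CWs_eps f e x x.
Proof. by move=> e0; apply: connected_component_refl => k; rewrite mdistxx. Qed.

Lemma dist_bounded : compact [set: X] -> exists M, forall a b : X, mdist a b <= M.
Proof.
move=> cX.
have [[x0 _]|nX] := pselect (exists x0 : X, True); last first.
  by exists 0 => a; exfalso; apply: nX; exists a.
suff [M HM] : exists M, forall b, mdist x0 b <= M.
  exists (M + M) => a b; apply: (le_trans (metric_triangle _ x0 _)).
  by rewrite metric_sym; apply: lerD.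
apply: contrapT => nB.
have ne : forall n : nat, [set b | n%:R < mdist x0 b] !=set0.
  move=> n; apply: contrapT => nn; apply: nB; exists n%:R => b.
  by rewrite leNgt; apply/negP => h; apply: nn; exists b.
have dec : forall n m : nat, (n <= m)%N -> [set b | m%:R < mdist x0 b] `<=` [set b | n%:R < mdist x0 b].
  by move=> n m nm b /=; apply: le_lt_trans; rewrite ler_nat.
have [z Hz] := cluster_seq cX ne dec.
have d0 : 0 <= mdist x0 z + 1 by rewrite addr_ge0 ?mdist_ge0.
have := archi_boundP d0.
set N := Num.Def.archi_bound _ => hN.
have [w' [hw' dzw']] := Hz N 1 ltr01.
have := metric_triangle x0 z w'.
move: hw' => /= hw'.
lra.
Qed.

Lemma diam_le (A : set X) M : A !=set0 -> (forall a b, A a -> A b -> mdist a b <= M) -> diam A <= M.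
Proof.
move=> [a Aa] H; apply: ge_sup.
  by exists (mdist a a); exists a => //; exists a.
by move=> _ [a' Aa' [b' Ab' <-]]; exact: H.
Qed.

Lemma diam_ge (A : set X) a b : compact [set: X] -> A a -> A b -> mdist a b <= diam A.
Proof.
move=> cX Aa Ab; have [M HM] := dist_bounded cX.
apply: ub_le_sup; last by exists a => //; exists b.
by exists M => _ [a' _ [b' _ <-]]; exact: HM.
Qed.

Lemma part1 (f g : X -> X) (alpha eps : R) (Neps : nat) x n :
  compact [set: X] -> homeo f g -> 0 < eps -> eps < alpha / 2 ->
  (forall C : set X, continuum C -> diam C >= eps ->
       exists n : int, `|n| <= Neps%:Z /\ diam (zpow f g n @` C) > alpha) ->
  (Neps <= n)%N ->
  iter n f @` CWs_eps f (alpha / 2) x `<=` CWs_eps f eps (iter n f x).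
Proof.
move=> cX hfg e0 ea hyp Nn.
have hfg' := hfg; case: hfg' => fc gc fK gK.
have a0 : 0 <= alpha / 2 by apply: ltW; apply: lt_trans ea.
set C := CWs_eps f (alpha / 2) x.
have Cx : C x by exact: CWs_refl.
apply: connected_component_max.
- by exists x.
- move=> _ [y Cy <-] k; rewrite -!iterD.
  rewrite leNgt; apply/negP => hgt.
  set E := iter (k + n) f @` C.
  have itc := @continuous_subspaceT X X C _ (iter_cont fc (k + n)).
  have contE : continuum E.
    split; first by exists (iter (k + n) f x); exists x.
      by apply: continuous_compact itc _; exact: CWs_compact.
    by apply: connected_continuous_connected itc; exact: component_connected.
  have dE : eps <= diam E.
    apply: (le_trans (ltW hgt)); apply: diam_ge cX _ _; by [exists x|exists y].
  have [m [hm hdm]] := hyp E contE dE.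
  have [t ht] : exists t : nat, (k + n)%:Z + m = t%:Z.
    by exists (absz ((k + n)%:Z + m)); rewrite gez0_abs //; lia.
  have : diam (zpow f g m @` E) <= alpha.
    apply: diam_le; first by exists (zpow f g m (iter (k + n) f x)); exists (iter (k + n) f x) => //; exists x.
    move=> _ _ [_ [y1 Cy1 <-] <-] [_ [y2 Cy2 <-] <-].
    rewrite !(zpow_iter fK _ _ _ _ ht).
    have W1 := connected_component_sub Cy1 t.
    have W2 := connected_component_sub Cy2 t.
    apply: (le_trans (metric_triangle _ (iter t f x) _)).
    rewrite metric_sym (splitr alpha); apply: lerD; [exact: W1|exact: W2].
  by move=> h; have := lt_le_trans hdm h; rewrite ltxx.
- apply: connected_continuous_connected (@continuous_subspaceT X X C _ (iter_cont fc n)).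
  exact: component_connected.
Qed.

Lemma inv_dec {n m} : (n <= m)%N -> m.+1%:R^-1 <= n.+1%:R^-1 :> R.
Proof. by move=> nm; rewrite lef_pV2 ?posrE ?ltr0Sn // ler_nat ltnS. Qed.

Lemma inv_pos n : 0 < n.+1%:R^-1 :> R.
Proof. by rewrite invr_gt0 ltr0Sn. Qed.

Lemma closed_mem {A : set X} {z} : closed A ->
  (forall e, 0 < e -> exists a, A a /\ mdist z a < e) -> A z.
Proof.
move=> cA H; apply: cA => N /nbhs_mdist [r r0 Hr].
by have [a [Aa da]] := H r r0; exists a; split => //; apply: Hr.
Qed.

Lemma nbhd_open (A : set X) r : open [set z | exists a, A a /\ mdist a z < r].
Proof.
rewrite openE => z [a [Aa daz]].
apply/nbhs_ballP; exists (r - mdist a z); first by rewrite /= subr_gt0.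
move=> w /ball_mdist dzw; exists a; split => //.
have := metric_triangle a z w; lra.
Qed.

Lemma conn_split {S U V : set X} : connected S -> open U -> open V ->
  (forall z, U z -> V z -> False) -> S `<=` U `|` V ->
  (exists u, S u /\ U u) -> (exists v, S v /\ V v) -> False.
Proof.
move=> cS oU oV dUV sS [u [Su Uu]] [v [Sv Vv]].
have E : S `&` U = S.
  apply: cS; first by exists u.
    by exists U.
  exists (~` V); first exact: open_closedC.
  apply/seteqP; split => z [Sz h]; split => //.
    by move=> Vz; exact: dUV h Vz.
  by case: (sS z Sz) => // Vz; exfalso; exact: h.
have : (S `&` U) v by rewrite E.
by case=> _ Uv; exact: dUV Uv Vv.
Qed.

Definition Lsup (B : nat -> set nat) (C : nat -> set X) : set X :=
  [set z | forall n e, 0 < e -> exists k, B n k /\ exists w, C k w /\ mdist z w < e].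

Lemma Lsup_closed B C : closed (Lsup B C).
Proof.
apply: mdist_closed => z H n e e0.
have e20 : 0 < e / 2 by rewrite divr_gt0.
have [a [La dza]] := H _ e20.
have [k [Bk [w [Cw daw]]]] := La n _ e20.
exists k; split => //; exists w; split => //.
have := metric_triangle z a w; lra.
Qed.

Lemma Lsup_connected B C p : compact [set: X] ->
  (forall n m, (n<=m)%N -> B m `<=` B n) -> (forall n, B n !=set0) ->
  (forall k, connected (C k)) ->
  (forall e, 0<e -> exists N, forall k, B N k -> exists w, C k w /\ mdist p w < e) ->
  connected (Lsup B C).
Proof.
move=> cX dec ne cC lim.
set L := Lsup B C.
have Lp : L p.
  move=> n e e0; have [N HN] := lim e e0; have [k Bk] := ne (maxn n N).
  exists k; split; first exact: (dec _ _ (leq_maxl n N) _ Bk).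
  exact: HN (dec _ _ (leq_maxr n N) _ Bk).
move=> B0 [b0 B0b0] [Op oO hO] [Cc cCl hC].
apply: contrapT => neq.
have sB0L : B0 `<=` L by rewrite hO => z [].
have [c [Lc nB0c]] : exists c, L c /\ ~ B0 c.
  apply: contrapT => h; apply: neq; apply/seteqP; split => // z Lz.
  by apply: contrapT => nz; apply: h; exists z.
set Bc := [set z | L z /\ ~ B0 z].
have cA : closed B0 by rewrite hC; apply: closedI; [exact: Lsup_closed|].
have cBc : closed Bc.
  have -> : Bc = L `&` ~` Op.
    apply/seteqP; split => z [Lz h]; split => //.
      by move=> Oz; apply: h; rewrite hO.
    by rewrite hO => -[].
  by apply: closedI; [exact: Lsup_closed|exact: open_closedC].
have [rho rho0 sep] : exists2 rho, 0 < rho & forall a b, B0 a -> Bc b -> rho <= mdist a b.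
  apply: contrapT => nsep.
  have ne' : forall n, [set a | B0 a /\ exists b, Bc b /\ mdist a b < n.+1%:R^-1] !=set0.
    move=> n; apply: contrapT => h; apply: nsep; exists n.+1%:R^-1; first exact: inv_pos.
    move=> a b Aa Bb; rewrite leNgt; apply/negP => hlt; apply: h; exists a; split => //; by exists b.
  have dec' : forall n m, (n<=m)%N -> [set a | B0 a /\ exists b, Bc b /\ mdist a b < m.+1%:R^-1] `<=` [set a | B0 a /\ exists b, Bc b /\ mdist a b < n.+1%:R^-1].
    move=> n m nm a [Aa [b [Bb dab]]]; split => //; exists b; split => //.
    exact: (lt_le_trans dab (inv_dec nm)).
  have [z Hz] := cluster_seq cX ne' dec'.
  have Az : B0 z.
    apply: (closed_mem cA) => e e0; have [a [[Aa _] dza]] := Hz 0%N e e0; by exists a.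
  have Bz : Bc z.
    apply: (closed_mem cBc) => e e0.
    have e20 : 0 < e / 2 by rewrite divr_gt0.
    have [N HN] := inv_small e20.
    have [a [[Aa [b [Bb dab]]] dza]] := Hz N _ e20.
    exists b; split => //.
    have h := lt_trans dab (HN N (leqnn N)).
    have := metric_triangle z a b; lra.
  by case: Bz.
set U := [set z | exists a, B0 a /\ mdist a z < rho / 2].
set V := [set z | exists a, Bc a /\ mdist a z < rho / 2].
have oU : open U := nbhd_open _ _.
have oV : open V := nbhd_open _ _.
have r20 : 0 < rho / 2 by rewrite divr_gt0.
have dUV : forall z, U z -> V z -> False.
  move=> z [a [Aa daz]] [b [Bb dbz]].
  have := sep _ _ Aa Bb; have := metric_triangle a z b; rewrite (metric_sym z b); lra.
have [N HN] : exists N, forall k, B N k -> C k `<=` U `|` V.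
  apply: contrapT => nN.
  have ne' : forall n, [set w | exists k, B n k /\ C k w /\ ~ (U `|` V) w] !=set0.
    move=> n; apply: contrapT => h; apply: nN; exists n => k Bk w Cw.
    by apply: contrapT => nw; apply: h; exists w; exists k.
  have dec' : forall n m, (n<=m)%N -> [set w | exists k, B m k /\ C k w /\ ~ (U `|` V) w] `<=` [set w | exists k, B n k /\ C k w /\ ~ (U `|` V) w].
    by move=> n m nm w [k [Bk h]]; exists k; split => //; exact: dec nm _ Bk.
  have [z Hz] := cluster_seq cX ne' dec'.
  have Lz : L z.
    move=> n e e0; have [w [[k [Bk [Cw _]]] dzw]] := Hz n e e0.
    by exists k; split => //; exists w.
  have [w [[k [_ [_ nw]]] dzw]] := Hz 0%N _ r20.
  apply: nw; have [Az|nAz] := pselect (B0 z).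
    by left; exists z.
  by right; exists z.
have [Ap|nAp] := pselect (B0 p).
  have [N1 HN1] := lim _ r20.
  have [k [Bk [w [Cw dcw]]]] := Lc (maxn N N1) _ r20.
  have BkN := dec _ _ (leq_maxl N N1) _ Bk.
  have BkN1 := dec _ _ (leq_maxr N N1) _ Bk.
  have [w' [Cw' dpw']] := HN1 _ BkN1.
  apply: (conn_split (cC k) oU oV dUV (HN _ BkN)).
    by exists w'; split => //; exists p.
  by exists w; split => //; exists c.
have [N1 HN1] := lim _ r20.
have [k [Bk [w [Cw dcw]]]] := sB0L _ B0b0 (maxn N N1) _ r20.
have BkN := dec _ _ (leq_maxl N N1) _ Bk.
have BkN1 := dec _ _ (leq_maxr N N1) _ Bk.
have [w' [Cw' dpw']] := HN1 _ BkN1.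
apply: (conn_split (cC k) oU oV dUV (HN _ BkN)).
  by exists w; split => //; exists b0.
by exists w'; split => //; exists p.
Qed.

Lemma part2 (f g : X -> X) (alpha eps : R) x :
  compact [set: X] -> homeo f g -> cw_expansive f g alpha -> 0 < eps -> eps < alpha / 2 ->
  CWs_eps f eps x `<=` Ws f x.
Proof.
move=> cX hfg [a0 cw] e0 ea.
have hfg' := hfg; case: hfg' => fc gc fK gK.
set D := CWs_eps f eps x.
have Dx : D x := CWs_refl f eps x (ltW e0).
move=> y Dy; rewrite /Ws /=; apply: contrapT => ncvg.
have [del del0 S] : exists2 del, 0 < del &
    forall m, exists k, (m <= k)%N /\ del <= mdist (iter k f x) (iter k f y).
  apply: contrapT => h; apply: ncvg.
  apply/cvgrPdist_lt => e e0'.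
  have [m Hm] : exists m, forall k, (m <= k)%N -> mdist (iter k f x) (iter k f y) < e.
    apply: contrapT => nm; apply: h; exists e => // m; apply: contrapT => nk; apply: nm.
    exists m => k mk; rewrite ltNge; apply/negP => hk; apply: nk; exists k; split => //.
  exists m => // k /= mk; rewrite sub0r normrN ger0_norm ?mdist_ge0 //; exact: Hm.
set P0 := fun n : nat => [set k : nat | (n <= k)%N /\ del <= mdist (iter k f x) (iter k f y)].
set F0 := fun n : nat => [set w | exists k, P0 n k /\ w = iter k f x].
have ne0 : forall n, F0 n !=set0.
  by move=> n; have [k [nk dk]] := S n; exists (iter k f x); exists k.
have dec0 : forall n m, (n <= m)%N -> F0 m `<=` F0 n.
  move=> n m nm w [k [[mk dk] ->]]; exists k; split => //; split => //.
  exact: leq_trans nm mk.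
have [p Hp] := cluster_seq cX ne0 dec0.
set B := fun n : nat => [set k : nat | P0 n k /\ mdist p (iter k f x) < n.+1%:R^-1].
have decB : forall n m, (n <= m)%N -> B m `<=` B n.
  move=> n m nm k [[mk dk] dpk]; split; first by split => //; exact: leq_trans nm mk.
  exact: lt_le_trans dpk (inv_dec nm).
have neB : forall n, B n !=set0.
  move=> n; have [w [[k [Pk ->]] dpw]] := Hp n _ (inv_pos n).
  by exists k.
set F1 := fun n : nat => [set w | exists k, B n k /\ w = iter k f y].
have ne1 : forall n, F1 n !=set0.
  by move=> n; have [k Bk] := neB n; exists (iter k f y); exists k.
have dec1 : forall n m, (n <= m)%N -> F1 m `<=` F1 n.
  by move=> n m nm w [k [Bk ->]]; exists k; split => //; exact: decB nm _ Bk.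
have [q Hq] := cluster_seq cX ne1 dec1.
set C := fun k : nat => iter k f @` D.
set L := Lsup B C.
have lim : forall e, 0 < e -> exists N, forall k, B N k -> exists w, C k w /\ mdist p w < e.
  move=> e e0'; have [N HN] := inv_small e0'; exists N => k [_ dpk].
  exists (iter k f x); split; first by exists x.
  exact: lt_trans dpk (HN N (leqnn N)).
have Lp : L p.
  move=> n e e0'; have [N HN] := lim e e0'; have [k Bk] := neB (maxn n N).
  exists k; split; first exact: (decB _ _ (leq_maxl n N) _ Bk).
  exact: HN (decB _ _ (leq_maxr n N) _ Bk).
have Lq : L q.
  move=> n e e0'; have [w [[k [Bk ->]] dqw]] := Hq n e e0'.
  by exists k; split => //; exists (iter k f y); split => //; exists y.
have dpq : del <= mdist p q.
  apply: le_eps => eta eta0.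
  have h2 : 0 < eta / 2 by rewrite divr_gt0.
  have [N HN] := inv_small h2.
  have [w0 [[k [Bk ->]] dqw]] := Hq N _ h2.
  move: Bk => [[Nk dk] dpk].
  have dpk' := lt_trans dpk (HN N (leqnn N)).
  have := metric_triangle (iter k f x) p (iter k f y).
  have := metric_triangle p q (iter k f y).
  rewrite (metric_sym (iter k f x) p); lra.
have cL : continuum L.
  split; first by exists p.
    exact: (subclosed_compact (Lsup_closed B C) cX (@subsetT _ _)).
  apply: (Lsup_connected B C p cX decB neB _ lim) => k.
  apply: connected_continuous_connected (@continuous_subspaceT X X D _ (iter_cont fc k)).
  exact: component_connected.
have ndL : Defs.nondegenerate L.
  exists p, q; split => //; apply/eqP => pq; move: dpq; rewrite pq mdistxx; lra.
have key : forall j z, L z -> mdist (zpow f g j p) (zpow f g j z) <= eps.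
  move=> j z Lz; apply: le_eps => eta eta0.
  have h2 : 0 < eta / 2 by rewrite divr_gt0.
  have hc := zpow_cont j hfg.
  have [r1 r10 H1] := @cont_ed _ hc p (eta / 2) h2.
  have [r2 r20 H2] := @cont_ed _ hc z (eta / 2) h2.
  have [N0 HN0] := inv_small r10.
  have [k [[[nk _] dpk] [w [[y' Dy' <-] dzw]]]] := Lz (maxn N0 (absz j)) r2 r20.
  have jk : (absz j <= k)%N := leq_trans (leq_maxr _ _) nk.
  have [t ht] : exists t : nat, k%:Z + j = t%:Z.
    by exists (absz (k%:Z + j)); rewrite gez0_abs //; lia.
  have h1 := H1 _ (lt_trans dpk (HN0 _ (leq_maxl _ _))).
  have h2' := H2 _ dzw.
  rewrite !(zpow_iter fK _ _ _ _ ht) in h1 h2'.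
  have hW := connected_component_sub Dy' t.
  have := metric_triangle (zpow f g j p) (iter t f x) (zpow f g j z).
  have := metric_triangle (iter t f x) (iter t f y') (zpow f g j z).
  rewrite (metric_sym (zpow f g j z) (iter t f y')) in h2'.
  move: hW => /= hW; lra.
have := cw L cL ndL.
have : sup [set diam (zpow f g n @` L) | n in [set: int]] <= eps + eps.
  apply: ge_sup; first by exists (diam (zpow f g 0 @` L)); exists 0.
  move=> _ [j _ <-]; apply: diam_le; first by exists (zpow f g j p); exists p.
  move=> _ _ [z1 Lz1 <-] [z2 Lz2 <-].
  have := key j _ Lz1; have := key j _ Lz2.
  have := metric_triangle (zpow f g j z1) (zpow f g j p) (zpow f g j z2).
  rewrite (metric_sym (zpow f g j z1) (zpow f g j p)); lra.
lra.
Qed.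

Lemma part3 (f g : X -> X) (alpha eps : R) (Neps : nat) x n :
  compact [set: X] -> homeo f g -> 0 < eps -> eps < alpha / 2 ->
  (forall C : set X, continuum C -> diam C >= eps ->
       exists n : int, `|n| <= Neps%:Z /\ diam (zpow f g n @` C) > alpha) ->
  (Neps <= n)%N ->
  CWs_eps f eps x =
    connected_component (Ws_eps f (alpha / 2) x `&` Ws_eps_n f eps n x) x.
Proof.
move=> cX hfg e0 ea hyp Nn.
apply/seteqP; split.
- apply: connected_component_max.
  + exact: CWs_refl (ltW e0).
  + move=> z Dz; have W := connected_component_sub Dz; split => k.
      exact: le_trans (W k) (ltW ea).
    by move=> _; exact: W k.
  + exact: component_connected.
- set K := connected_component _ x.
  have Kx : K x.
    apply: connected_component_refl; split => [k|r _]; rewrite mdistxx //.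
      by apply: ltW; apply: lt_trans ea.
    exact: ltW.
  have KC : K `<=` CWs_eps f (alpha / 2) x.
    apply: connected_component_max => //; last exact: component_connected.
    by move=> w h; case: (connected_component_sub h).
  apply: connected_component_max => //; last exact: component_connected.
  move=> z Kz k.
  case: (leqP k n) => [kn|nk].
    by case: (connected_component_sub Kz) => _; apply.
  have := @part1 f g alpha eps Neps x n cX hfg e0 ea hyp Nn _ (ex_intro2 _ _ z (KC z Kz) erefl).
  move=> /connected_component_sub /(_ (k - n)%N).
  by rewrite -!iterD subnK // ltnW.
Qed.
End H.

Theorem mainTheorem4 (R : realType) (X : metricType R) (f g : X -> X) (alpha : R) :
  compact [set: X] -> homeo f g -> cw_expansive f g alpha ->
  forall (x : X) (eps : R) (Neps : nat),
    0 < eps -> eps < alpha / 2 -> (0 < Neps)%N ->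
    (forall C : set X, continuum C -> diam C >= eps ->
       exists n : int, `|n| <= Neps%:Z /\ diam (zpow f g n @` C) > alpha) ->
    forall n : nat, (Neps <= n)%N ->
      [/\ iter n f @` CWs_eps f (alpha / 2) x `<=` CWs_eps f eps (iter n f x),
          CWs_eps f eps x `<=` Ws f x
        & CWs_eps f eps x =
            connected_component (Ws_eps f (alpha / 2) x `&` Ws_eps_n f eps n x) x].
Proof.
move=> cX hfg cw x eps Neps e0 ea _ hyp n Nn; split.
- exact: (@part1 R X f g alpha eps Neps x n cX hfg e0 ea hyp Nn).
- exact: (@part2 R X f g alpha eps x cX hfg cw e0 ea).
- exact: (@part3 R X f g alpha eps Neps x n cX hfg e0 ea hyp Nn).
Qed.
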